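(* Let $n,m\in\mathbb{N}$, $\beta\in\mathbb{C}$ and $u\in S(n,\beta)$ (so also $u\in S(nm,\beta)$). Suppose the representatives $\{R_j^{nm,1}\}_{j\in I_{nm}}$ of $\Gamma_0(nm)\backslash SL(2,\mathbb{Z})$ and $\{R_i^{n,1}\}_{i\in I_n}$ of $\Gamma_0(n)\backslash SL(2,\mathbb{Z})$ satisfy $R_j^{nm,1}=R_{r(j)}^{nm,n}R^{n,1}_{\sigma_{m,n}(j)}$ for all $j\in I_{nm}$, where each $R_{r(j)}^{nm,n}$ is a representative of a coset in $\Gamma_0(nm)\backslash\Gamma_0(n)$. Then $(\mathrm{P}_{nm}\Pi_{nm}u)_j=(\mathrm{P}_n\Pi_nu)_{\sigma_{m,n}(j)}$ for all $j\in I_{nm}$.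
   Context: $\Gamma_0(N)=\{\begin{pmatrix}a&b\\c&d\end{pmatrix}\in SL(2,\mathbb{Z}):N\mid c\}$. $S(N,\beta)$: Maass cusp forms for $\Gamma_0(N)$ with spectral parameter $\beta$ (real-analytic, $\Gamma_0(N)$-invariant, eigenvalue $\beta(1-\beta)$ of $-y^2(\partial_x^2+\partial_y^2)$, rapid decay in cusps). $I_N$ indexes the right cosets $\Gamma_0(N)\backslash SL(2,\mathbb{Z})$ (coset $\Gamma_0(N)\begin{pmatrix}a&b\\c&d\end{pmatrix}$ labelled by the class $[c:d]_N$ of $(c,d)$ modulo $(x,y)\sim(kx,ky)\bmod N$, $\gcd(k,N)=1$), $R_i^{N,1}$ a representative of coset $i$; $\sigma_{m,n}:I_{nm}\to I_n$ is induced by $\Gamma_0(nm)g\mapsto\Gamma_0(n)g$. $\Pi_Nu=(u(R_i^{N,1}z))_{i\in I_N}$. $R_\zeta(z)=\frac{y}{(x-\zeta)^2+y^2}$ for $z=x+iy$; $\eta(u,v)=(v\partial_yu-u\partial_yv)dx+(u\partial_xv-v\partial_xu)dy$; $(\mathrm{P}_N\vec u)_i(\zeta)=\int_0^{i\infty}\eta(u_i,R_\zeta^\beta)$. *)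

(* Defs.v *)
From Stdlib Require Import Reals ZArith Lia Lra Psatz.
From Stdlib Require Import FunctionalExtensionality PropExtensionality.
From Coquelicot Require Import Coquelicot.
Set Implicit Arguments.
Open Scope R_scope.

Record mat := Mat { ma : Z; mb : Z; mc : Z; md : Z }.

Definition matmul (g h : mat) : mat :=
  Mat (ma g * ma h + mb g * mc h)%Z (ma g * mb h + mb g * md h)%Z
      (mc g * ma h + md g * mc h)%Z (mc g * mb h + md g * md h)%Z.

(* adjugate = inverse for determinant-one matrices *)
Definition matinv (g : mat) : mat := Mat (md g) (- mb g)%Z (- mc g)%Z (ma g).

Definition SL2Z (g : mat) : Prop := (ma g * md g - mb g * mc g = 1)%Z.

Definition Gamma0 (N : Z) (g : mat) : Prop := SL2Z g /\ (N | mc g)%Z.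

Definition coset (N : Z) (g : mat) : mat -> Prop :=
  fun h => SL2Z h /\ Gamma0 N (matmul h (matinv g)).

(* I_N : the set of right cosets Gamma_0(N)\SL(2,Z) (the coset labelled
   [c:d]_N in the paper is the coset of any matrix with bottom row (c,d)) *)
Definition cosets (N : Z) : Type :=
  { S : mat -> Prop | exists g, SL2Z g /\ S = coset N g }.

Definition in_coset (N : Z) (i : cosets N) (g : mat) : Prop := proj1_sig i g.

Definition sigma_set (n : Z) (S : mat -> Prop) : mat -> Prop :=
  fun h => exists g, S g /\ coset n g h.

Lemma pluecker (a b c d c0 d0 ch dh : Z) :
 ((ch*d0 - dh*c0) * (c*b - d*a) =
  (ch*d - dh*c)*(c0*b - d0*a) - (ch*b - dh*a)*(c0*d - d0*c))%Z.
Proof. ring. Qed.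

Lemma coset_trans (N : Z) (g0 g h : mat) :
  SL2Z g -> (N | (mc g * md g0 - md g * mc g0))%Z ->
  (N | (mc h * md g - md h * mc g))%Z ->
  (N | (mc h * md g0 - md h * mc g0))%Z.
Proof.
  unfold SL2Z; intros Hg H1 H2.
  pose proof (pluecker (ma g) (mb g) (mc g) (md g) (mc g0) (md g0) (mc h) (md h)) as P.
  replace (mc g * mb g - md g * ma g)%Z with (-1)%Z in P by lia.
  replace (mc h * md g0 - md h * mc g0)%Z with
    (- ((mc h * md g - md h * mc g) * (mc g0 * mb g - md g0 * ma g))
     + (mc h * mb g - md h * ma g) * (mc g0 * md g - md g0 * mc g))%Z by lia.
  apply Z.divide_add_r.
  - apply Z.divide_opp_r, Z.divide_mul_l, H2.
  - apply Z.divide_mul_r.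
    replace (mc g0 * md g - md g0 * mc g)%Z with (- (mc g * md g0 - md g * mc g0))%Z by ring.
    apply Z.divide_opp_r, H1.
Qed.

Lemma sigma_set_coset (n m : Z) (g0 : mat) :
  SL2Z g0 -> sigma_set n (coset (n * m) g0) = coset n g0.
Proof.
  intro H0.
  apply functional_extensionality; intro h; apply propositional_extensionality.
  unfold sigma_set, coset, Gamma0; simpl; split.
  - intros [g [[Hg [_ Hgg]] [Hh [_ Hhg]]]]. split; [exact Hh|]. split.
    + unfold SL2Z in *; simpl; nia.
    + replace (mc h * md g0 + md h * - mc g0)%Z with (mc h * md g0 - md h * mc g0)%Z
        by ring.
      apply coset_trans with (g := g); auto.
      * destruct Hgg as [k Hk]. exists (k * m)%Z. lia.
      * replace (mc h * md g - md h * mc g)%Z with (mc h * md g + md h * - mc g)%Z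
          by ring; exact Hhg.
  - intros [Hh Hhg]. exists g0. split; [|split; assumption].
    split; [exact H0|]. split.
    + unfold SL2Z in *; simpl; nia.
    + exists 0%Z. ring.
Qed.

Definition sigma_mn (n m : Z) (j : cosets (n * m)) : cosets n.
Proof.
  refine (exist _ (sigma_set n (proj1_sig j)) _).
  destruct j as [S [g0 [H0 ->]]]; simpl.
  exists g0; split; [exact H0|]. apply sigma_set_coset; exact H0.
Defined.

Definition Re (z : C) : R := fst z.
Definition Im (z : C) : R := snd z.

Definition mobius (g : mat) (z : C) : C :=
  Cdiv (Cplus (Cmult (RtoC (IZR (ma g))) z) (RtoC (IZR (mb g))))
       (Cplus (Cmult (RtoC (IZR (mc g))) z) (RtoC (IZR (md g)))).

Definition dx (u : C -> C) : C -> C := fun z =>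
  (Derive (fun t => fst (u (t, Im z))) (Re z), Derive (fun t => snd (u (t, Im z))) (Re z)).
Definition dy (u : C -> C) : C -> C := fun z =>
  (Derive (fun t => fst (u (Re z, t))) (Im z), Derive (fun t => snd (u (Re z, t))) (Im z)).

Definition real_analytic_at (u : C -> C) (x0 y0 : R) : Prop :=
  exists r : R, 0 < r /\ exists a : nat -> nat -> C,
    forall x y : R, Rabs (x - x0) < r -> Rabs (y - y0) < r ->
      (forall k, ex_series (fun l => Cmod (a k l) * Rabs (x - x0) ^ k * Rabs (y - y0) ^ l)) /\
      ex_series (fun k => Series (fun l => Cmod (a k l) * Rabs (x - x0) ^ k * Rabs (y - y0) ^ l)) /\
      exists s : nat -> C,
        (forall k, is_series (V := C_R_NormedModule)
                     (fun l => Cmult (a k l) (RtoC ((x - x0) ^ k * (y - y0) ^ l))) (s k)) /\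
        is_series (V := C_R_NormedModule) s (u (x, y)).

Definition maass_cusp_form (N : Z) (beta : C) (u : C -> C) : Prop :=
  (forall x y : R, 0 < y -> real_analytic_at u x y) /\
  (forall g, Gamma0 N g -> forall z : C, 0 < Im z -> u (mobius g z) = u z) /\
  (forall z : C, 0 < Im z ->
     Cmult (RtoC (- (Im z) ^ 2)) (Cplus (dx (dx u) z) (dy (dy u) z))
     = Cmult (Cmult beta (Cminus 1 beta)) (u z)) /\
  (* rapid decay in every cusp g(i oo), g in SL(2,Z) *)
  (forall g, SL2Z g -> forall k : nat, exists K Y : R, forall x y : R, Y < y ->
     Cmod (u (mobius g (x, y))) <= K / y ^ k).

(* principal branch of the argument, in (-pi, pi] *)
Definition Arg (z : C) : R :=
  let x := fst z in let y := snd z in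
  if Rlt_dec 0 x then atan (y / x)
  else if Rlt_dec x 0 then (if Rle_dec 0 y then atan (y / x) + PI else atan (y / x) - PI)
  else if Rlt_dec 0 y then PI / 2
  else if Rlt_dec y 0 then - (PI / 2) else 0.

Definition Cexp (z : C) : C := (exp (fst z) * cos (snd z), exp (fst z) * sin (snd z)).
Definition Clog (z : C) : C := (ln (Cmod z), Arg z).
Definition Cpow (z w : C) : C :=
  if Req_EM_T (Cmod z) 0 then RtoC 0 else Cexp (Cmult w (Clog z)).

Definition Rzeta (zeta : C) (z : C) : C :=
  Cdiv (RtoC (Im z))
       (Cplus (Cmult (Cminus (RtoC (Re z)) zeta) (Cminus (RtoC (Re z)) zeta))
              (RtoC (Im z ^ 2))).

(* the 1-form eta(u,v) = (v u_y - u v_y) dx + (u v_x - v u_x) dy,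
   as the pair of its dx- and dy-coefficients *)
Definition eta (u v : C -> C) : (C -> C) * (C -> C) :=
  (fun z => Cminus (Cmult (v z) (dy u z)) (Cmult (u z) (dy v z)),
   fun z => Cminus (Cmult (u z) (dx v z)) (Cmult (v z) (dx u z))).

(* integral of a 1-form along the imaginary axis from 0 to i oo,
   parametrized by t |-> (0, t), t in (0, oo) *)
Definition int_0_ioo (w : (C -> C) * (C -> C)) : C :=
  RInt_gen (V := C_R_CompleteNormedModule)
    (fun t => Cplus (Cmult (fst w (0, t)) (RtoC 0)) (Cmult (snd w (0, t)) (RtoC 1)))
    (at_right 0) (Rbar_locally p_infty).

Definition PN (N : Z) (beta : C) (v : cosets N -> C -> C) : cosets N -> C -> C :=
  fun i zeta => int_0_ioo (eta (v i) (fun z => Cpow (Rzeta zeta z) beta)).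

Definition PiN (N : Z) (rep : cosets N -> mat) (u : C -> C) : cosets N -> C -> C :=
  fun i z => u (mobius (rep i) z).

Arguments sigma_mn n m j : assert.

(* Main.v *)
Require Import Defs.
From Stdlib Require Import Reals ZArith.
From Coquelicot Require Import Coquelicot.
From Stdlib Require Import Lia Lra FunctionalExtensionality PropExtensionality.

Lemma SL2Z_mul g h : SL2Z g -> SL2Z h -> SL2Z (matmul g h).
Proof. unfold SL2Z; destruct g, h; simpl. intros. nia. Qed.

Lemma denom_nz g (z : C) : SL2Z g -> 0 < Im z ->
  Cplus (Cmult (RtoC (IZR (mc g))) z) (RtoC (IZR (md g))) <> 0.
Proof.
  unfold SL2Z, Im; destruct g as [a b c d], z as [x y]; simpl; intros H Hy E.
  injection E; clear E; intros E2 E1.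
  assert (Hc : IZR c = 0) by nra.
  apply eq_IZR_R0 in Hc; subst c.
  assert (Hd : IZR d = 0) by nra.
  apply eq_IZR_R0 in Hd; subst d. lia.
Qed.

Lemma mobius_Im g (z : C) : SL2Z g -> 0 < Im z -> 0 < Im (mobius g z).
Proof.
  intros H Hy. pose proof (denom_nz g z H Hy) as Hnz.
  revert H Hy Hnz.
  unfold SL2Z, Im, mobius; destruct g as [a b c d], z as [x y]; simpl; intros H Hy Hnz.
  assert (HD : 0 < (IZR c * x + IZR d)^2 + (IZR c * y)^2).
  { destruct (Req_dec (IZR c * y) 0) as [E|E].
    - assert (IZR c * x + IZR d <> 0).
      { intro E'. apply Hnz. unfold Cplus, Cmult, RtoC; simpl. f_equal; lra. }
      pose proof (Rlt_0_sqr _ H0) as Hs. unfold Rsqr in Hs. rewrite E. nra.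
    - pose proof (Rlt_0_sqr _ E) as Hs. unfold Rsqr in Hs.
      pose proof (pow2_ge_0 (IZR c * x + IZR d)). nra. }
  apply IZR_eq in H. rewrite minus_IZR, !mult_IZR in H.
  unfold Cdiv, Cinv, Cmult, Cplus, RtoC; simpl.
  replace ((IZR c * x - 0 * y + IZR d) * ((IZR c * x - 0 * y + IZR d) * 1) +
     (IZR c * y + 0 * x + 0) * ((IZR c * y + 0 * x + 0) * 1)) with
     ((IZR c * x + IZR d)^2 + (IZR c * y)^2) by ring.
  match goal with |- 0 < ?e => replace e with (y / ((IZR c * x + IZR d)^2 + (IZR c * y)^2)) end.
  - apply Rdiv_lt_0_compat; lra.
  - field_simplify; [|lra|lra]. f_equal. nra.
Qed.

Lemma mobius_comp g h (z : C) : SL2Z g -> SL2Z h -> 0 < Im z ->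
  mobius (matmul g h) z = mobius g (mobius h z).
Proof.
  intros Hg Hh Hy.
  pose proof (denom_nz h z Hh Hy) as N1.
  pose proof (denom_nz (matmul g h) z (SL2Z_mul _ _ Hg Hh) Hy) as N2.
  revert N1 N2. unfold mobius; destruct g as [a b c d], h as [a' b' c' d']; simpl.
  rewrite !plus_IZR, !mult_IZR, !RtoC_plus, !RtoC_mult. intros N1 N2.
  set (Q := Cplus (Cmult (RtoC (IZR c')) z) (RtoC (IZR d'))) in *.
  set (P := Cplus (Cmult (RtoC (IZR a')) z) (RtoC (IZR b'))).
  assert (E : Cplus (Cmult (RtoC (IZR c)) (Cdiv P Q)) (RtoC (IZR d)) =
     Cdiv (Cplus (Cmult (Cplus (Cmult (RtoC (IZR c)) (RtoC (IZR a'))) (Cmult (RtoC (IZR d)) (RtoC (IZR c')))) z)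
       (Cplus (Cmult (RtoC (IZR c)) (RtoC (IZR b'))) (Cmult (RtoC (IZR d)) (RtoC (IZR d'))))) Q).
  { unfold P, Q. field. exact N1. }
  rewrite E. unfold P, Q in *. field. split; assumption.
Qed.

Lemma in_coset_SL N (i : cosets N) g : in_coset i g -> SL2Z g.
Proof. destruct i as [S [g0 [H0 ->]]]; unfold in_coset; simpl. intros [H _]; exact H. Qed.

Lemma int_ext (f g v : C -> C) : (forall z, 0 < Im z -> f z = g z) ->
  int_0_ioo (eta f v) = int_0_ioo (eta g v).
Proof.
  intros Hfg. unfold int_0_ioo, RInt_gen.
  set (F := fun t : R => _ : C).
  set (G := fun t : R => _ : C).
  assert (Hpt : forall t, 0 < t -> F t = G t).
  { intros t Ht. unfold F, G, eta; simpl.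
    assert (E0 : f (0, t) = g (0, t)) by (apply Hfg; exact Ht).
    assert (Ey : dy f (0, t) = dy g (0, t)).
    { unfold dy, Re, Im; simpl. f_equal; apply Derive_ext_loc;
      exists (mkposreal t Ht); intros s Hs;
      (assert (Hs' : 0 < s) by (unfold ball in Hs; simpl in Hs; unfold AbsRing_ball, abs, minus, plus, opp in Hs; simpl in Hs;
          apply Rabs_def2 in Hs; lra));
      first [exact (f_equal fst (Hfg (0,s) Hs')) | exact (f_equal snd (Hfg (0,s) Hs'))]. }
    assert (Ex : dx f (0, t) = dx g (0, t)).
    { unfold dx, Re, Im; simpl. f_equal; apply Derive_ext; intro s;
      rewrite (Hfg (s, t) Ht); reflexivity. }
    rewrite E0, Ey, Ex. reflexivity. }
  assert (HP : is_RInt_gen (V := C_R_CompleteNormedModule) F (at_right 0) (Rbar_locally p_infty) =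
               is_RInt_gen (V := C_R_CompleteNormedModule) G (at_right 0) (Rbar_locally p_infty)).
  { apply functional_extensionality; intro l; apply propositional_extensionality.
    assert (Hfil : filter_prod (at_right 0) (Rbar_locally p_infty)
       (fun ab : R * R => forall x, Rmin (fst ab) (snd ab) < x < Rmax (fst ab) (snd ab) -> F x = G x)).
    { apply (Filter_prod _ _ _ (fun a => 0 < a) (fun b => 0 < b)).
      - exists (mkposreal 1 Rlt_0_1). intros y _ Hy. exact Hy.
      - exists 0. intros x Hx. exact Hx.
      - intros a b Ha Hb x [Hx _]. apply Hpt. simpl in Hx.
        pose proof (Rmin_glb_lt a b 0 Ha Hb). lra. }
    split; intro H.
    - eapply is_RInt_gen_ext; [exact Hfil| exact H].
    - eapply is_RInt_gen_ext; [|exact H].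
      eapply filter_imp; [|exact Hfil]. intros [a b] Hab x Hx. symmetry. apply Hab, Hx. }
  exact (f_equal iota HP).
Qed.

Theorem mainTheorem12 (n m : Z) (beta : C) (u : C -> C)
  (Hn : (0 < n)%Z) (Hm : (0 < m)%Z)
  (Hu : maass_cusp_form n beta u)
  (Rnm : cosets (n * m) -> mat) (Rn : cosets n -> mat)
  (HRnm : forall j, in_coset j (Rnm j)) (HRn : forall i, in_coset i (Rn i))
  (K : Type) (Rnmn : K -> mat) (r : cosets (n * m) -> K)
  (HRnmn : forall j, Gamma0 n (Rnmn (r j)))
  (Hfact : forall j, Rnm j = matmul (Rnmn (r j)) (Rn (sigma_mn n m j))) :
  forall (j : cosets (n * m)) (zeta : C),
    PN beta (PiN Rnm u) j zeta = PN beta (PiN Rn u) (sigma_mn n m j) zeta.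
Proof.
  intros j zeta. unfold PN. apply int_ext. intros z Hz. unfold PiN.
  pose proof (in_coset_SL _ _ _ (HRn (sigma_mn n m j))) as Hs.
  rewrite Hfact. rewrite mobius_comp; [| exact (proj1 (HRnmn j)) | exact Hs | exact Hz].
  apply (proj1 (proj2 Hu)); [exact (HRnmn j)|]. apply mobius_Im; assumption.
Qed.
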